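(* Let $(A,B)$ be a $3\times 3$ bimatrix game which is zero-sum, satisfies $a_{ij}\neq a_{i'j}$ and $b_{ij}\ne b_{ij'}$ for all $i\ne i'$, $j\ne j'$, and has a unique Nash equilibrium, which lies in the interior of $\Sigma_A\times\Sigma_B$. Then: (1) the transition diagram of $(A,B)$ has no alternating cycles; (2) the transition diagram has no sinks; (3) the transition diagram has no sources.
   Context: $\Sigma_A$, $\Sigma_B$ are the simplices of probability row, resp. column, vectors in $\mathbb{R}^3$; $\mathrm{BR}_A(q)=\operatorname{argmax}_{p\in\Sigma_A}pAq$, $\mathrm{BR}_B(p)=\operatorname{argmax}_{q\in\Sigma_B}pBq$; a Nash equilibrium is $(\bar p,\bar q)$ with $\bar p\in\mathrm{BR}_A(\bar q)$, $\bar q\in\mathrm{BR}_B(\bar p)$. The game is zero-sum if there are $e,g>0$, $f_j,h_i\in\mathbb{R}$ such that $C=(e a_{ij}+f_j)$ and $D=(g b_{ij}+h_i)$ satisfy $C+D=0$. The transition diagram: for $i\ne i'$, $(i,j)\to(i',j)$ iff $a_{i'j}>a_{ij}$; for $j\ne j'$, $(i,j)\to(i,j')$ iff $b_{ij'}>b_{ij}$. A cell $(i,j)$ is a sink if $(i',j)\to(i,j)$ and $(i,j')\to(i,j)$ for all $i'\ne i,j'\ne j$, and a source if all these arrows point out of $(i,j)$. An alternating cycle is a sequence of cells $(i_0,j_0),\dots,(i_n,j_n)=(i_0,j_0)$, consecutive ones differing in exactly one coordinate, such that either $(i_k,j_k)\to(i_{k+1},j_{k+1})$ whenever $i_k\ne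 i_{k+1}$ and $(i_{k+1},j_{k+1})\to(i_k,j_k)$ whenever $j_k\ne j_{k+1}$, or the same with both directions reversed. *)

(* Defs.v *)
From HB Require Import structures.
From mathcomp Require Import all_boot all_order all_algebra.
From mathcomp Require Import reals.
Set Implicit Arguments. Unset Strict Implicit. Unset Printing Implicit Defensive.
Import Order.TTheory GRing.Theory Num.Theory.
Local Open Scope ring_scope.

Section Bimatrix.
Variable R : realType.

Definition in_SigmaA (p : 'rV[R]_3) : Prop :=
  (forall j, 0 <= p 0 j) /\ \sum_(j < 3) p 0 j = 1.
Definition in_SigmaB (q : 'cV[R]_3) : Prop :=
  (forall i, 0 <= q i 0) /\ \sum_(i < 3) q i 0 = 1.

Definition payoff (p : 'rV[R]_3) (M : 'M[R]_3) (q : 'cV[R]_3) : R :=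
  (p *m M *m q) 0 0.

Definition in_BR_A (A : 'M[R]_3) (q : 'cV[R]_3) (p : 'rV[R]_3) : Prop :=
  in_SigmaA p /\ forall p', in_SigmaA p' -> payoff p' A q <= payoff p A q.
Definition in_BR_B (B : 'M[R]_3) (p : 'rV[R]_3) (q : 'cV[R]_3) : Prop :=
  in_SigmaB q /\ forall q', in_SigmaB q' -> payoff p B q' <= payoff p B q.

Definition nash_eq (A B : 'M[R]_3) (p : 'rV[R]_3) (q : 'cV[R]_3) : Prop :=
  in_BR_A A q p /\ in_BR_B B p q.

(* zero-sum up to positive affine rescaling of each player's payoffs *)
Definition zero_sum (A B : 'M[R]_3) : Prop :=
  exists (e g : R) (f h : 'I_3 -> R), 0 < e /\ 0 < g /\
    forall i j, (e * A i j + f j) + (g * B i j + h i) = 0.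

Definition cell := ('I_3 * 'I_3)%type.

Definition arrow (A B : 'M[R]_3) (c d : cell) : Prop :=
  (c.2 = d.2 /\ c.1 != d.1 /\ A c.1 c.2 < A d.1 c.2) \/
  (c.1 = d.1 /\ c.2 != d.2 /\ B c.1 c.2 < B c.1 d.2).

Definition is_sink (A B : 'M[R]_3) (c : cell) : Prop :=
  (forall i', i' != c.1 -> arrow A B (i', c.2) c) /\
  (forall j', j' != c.2 -> arrow A B (c.1, j') c).

Definition is_source (A B : 'M[R]_3) (c : cell) : Prop :=
  (forall i', i' != c.1 -> arrow A B c (i', c.2)) /\
  (forall j', j' != c.2 -> arrow A B c (c.1, j')).

Definition alternating_cycle (A B : 'M[R]_3) (n : nat) (c : nat -> cell) : Prop :=
  (0 < n)%N /\ c n = c 0%N /\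
  (forall k, (k < n)%N ->
     ((c k).1 != (c k.+1).1) (+) ((c k).2 != (c k.+1).2)) /\
  ((forall k, (k < n)%N ->
      ((c k).1 != (c k.+1).1 -> arrow A B (c k) (c k.+1)) /\
      ((c k).2 != (c k.+1).2 -> arrow A B (c k.+1) (c k))) \/
   (forall k, (k < n)%N ->
      ((c k).1 != (c k.+1).1 -> arrow A B (c k.+1) (c k)) /\
      ((c k).2 != (c k.+1).2 -> arrow A B (c k) (c k.+1)))).

End Bimatrix.

(* Main.v *)
Require Import Defs.
From HB Require Import structures.
From mathcomp Require Import all_boot all_order all_algebra.
From mathcomp Require Import reals.
From mathcomp Require Import ring lra.
Import Order.TTheory GRing.Theory Num.Theory.
Local Open Scope ring_scope.
Section H.
Variable R : realType.

Lemma payoffE (p : 'rV[R]_3) M q :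
  payoff p M q = \sum_k \sum_l p 0 k * M k l * q l 0.
Proof.
rewrite /payoff mxE [RHS]exchange_big /=; apply: eq_bigr => l _.
idtac.
by rewrite mxE big_distrl.
Qed.

Definition er (k : 'I_3) : 'rV[R]_3 := \row_m (m == k)%:R.
Definition ec (k : 'I_3) : 'cV[R]_3 := \col_m (m == k)%:R.

Lemma sigma_er k : in_SigmaA (er k).
Proof.
split; first by move=> j; rewrite mxE ler0n.
rewrite (bigD1 k) //= mxE eqxx big1 ?addr0 // => j /negbTE nj.
by rewrite mxE nj.
Qed.

Lemma sigma_ec k : in_SigmaB (ec k).
Proof.
split; first by move=> j; rewrite mxE ler0n.
rewrite (bigD1 k) //= mxE eqxx big1 ?addr0 // => j /negbTE nj.
by rewrite mxE nj.
Qed.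

Lemma payoff_er k M (q : 'cV[R]_3) : payoff (er k) M q = \sum_l M k l * q l 0.
Proof.
rewrite payoffE (bigD1 k) //= [X in _ + X]big1 ?addr0.
  by apply: eq_bigr => l _; rewrite mxE eqxx mul1r.
by move=> k' /negbTE nk; apply: big1 => l _; rewrite mxE nk !mul0r.
Qed.

Lemma payoff_ec (p : 'rV[R]_3) M l : payoff p M (ec l) = \sum_k p 0 k * M k l.
Proof.
rewrite payoffE; apply: eq_bigr => k _.
rewrite (bigD1 l) //= big1 ?addr0.
  by rewrite mxE eqxx mulr1.
by move=> l' /negbTE nl; rewrite mxE nl mulr0.
Qed.

Lemma payoff_er_ec i M j : payoff (er i) M (ec j) = M i j.
Proof.
rewrite payoff_er (bigD1 j) //= big1 ?addr0.
  by rewrite mxE eqxx mulr1.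
by move=> l' /negbTE nl; rewrite mxE nl mulr0.
Qed.

Lemma avg_id (w x : 'I_3 -> R) v : \sum_k w k = 1 ->
  \sum_k w k * (v - x k) = v - \sum_k w k * x k.
Proof.
move=> Hs.
under eq_bigr do rewrite mulrBr.
by rewrite sumrB -big_distrl /= Hs mul1r.
Qed.

Lemma indiff (w x : 'I_3 -> R) v : (forall k, 0 < w k) -> \sum_k w k = 1 ->
  (forall k, x k <= v) -> \sum_k w k * x k = v -> forall k, x k = v.
Proof.
move=> Hp Hs Hle Hav k.
have H0 : \sum_k w k * (v - x k) = 0 by rewrite avg_id // Hav subrr.
have Hge : forall i, predT i -> 0 <= w i * (v - x i).
  by move=> i _; apply: mulr_ge0; [exact: ltW | rewrite subr_ge0].
have := @psumr_eq0P _ _ predT (fun k => w k * (v - x k)) Hge H0 k isT.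
move/eqP; rewrite mulf_eq0 gt_eqF //= subr_eq0 => /eqP <-.
by [].
Qed.

Lemma strict_avg (w x : 'I_3 -> R) i0 : (forall k, 0 < w k) -> \sum_k w k = 1 ->
  (forall k, k != i0 -> x k < x i0) -> \sum_k w k * x k < x i0.
Proof.
move=> Hp Hs Hlt.
pose k1 : 'I_3 := if i0 == ord0 then ord_max else ord0.
have nk1 : k1 != i0.
  rewrite /k1; have [->|ni] := eqVneq i0 ord0; first by [].
  by rewrite eq_sym.
have h1 : 0 < w k1 * (x i0 - x k1) by rewrite mulr_gt0 // subr_gt0 Hlt.
have h2 : 0 <= \sum_(k | k != k1) w k * (x i0 - x k).
  apply: sumr_ge0 => k _; apply: mulr_ge0; first exact: ltW.
  have [->|nk] := eqVneq k i0; first by rewrite subrr.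
  by rewrite ltW // subr_gt0 Hlt.
have := avg_id w x (x i0) Hs.
rewrite (bigD1 k1) //=.
lra.
Qed.

End H.
Section P.
Variable R : realType.

Lemma chain (phi : cell -> R) n (c : nat -> cell) : (0 < n)%N ->
  (forall k, (k < n)%N -> phi (c k) < phi (c k.+1)) -> phi (c 0%N) < phi (c n).
Proof.
move=> n0 H.
suff S : forall k, (0 < k)%N -> (k <= n)%N -> phi (c 0%N) < phi (c k).
  exact: S.
elim=> [//|k IH] _ Hk.
have Hkn : (k < n)%N by [].
have := H k Hkn.
case: (posnP k) => [->|kpos] Hs; first by [].
exact: lt_trans (IH kpos (ltnW Hkn)) Hs.
Qed.

Lemma step_up (A B : 'M[R]_3) e g (f h : 'I_3 -> R) (a b : cell) :
  0 < e -> 0 < g ->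
  (forall i j, (e * A i j + f j) + (g * B i j + h i) = 0) ->
  ((a.1 != b.1) (+) (a.2 != b.2)) ->
  (a.1 != b.1 -> arrow A B a b) -> (a.2 != b.2 -> arrow A B b a) ->
  e * A a.1 a.2 + f a.2 < e * A b.1 b.2 + f b.2.
Proof.
move=> e0 g0 Hz; case: a => i j; case: b => i' j' /=.
have [ii|ii] := eqVneq i i'; have [jj|jj] := eqVneq j j'.
all: rewrite /= => X H1 H2; move: X; rewrite ?eqxx // => _.
- subst i'; have := H2 isT; rewrite /arrow /= => -[[E _]|[_ [_ Hl]]].
    by move: jj; rewrite E eqxx.
  have := Hz i j; have := Hz i j'.
  have : g * B i j' < g * B i j by rewrite ltr_pM2l.
  lra.
- subst j'; have := H1 isT; rewrite /arrow /= => -[[_ [_ Hl]]|[E _]].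
    by rewrite ltrD2r ltr_pM2l.
  by move: ii; rewrite E eqxx.
Qed.

End P.
Theorem mainTheorem3 (R : realType) (A B : 'M[R]_3) :
  zero_sum A B ->
  (forall i i' j, i != i' -> A i j != A i' j) ->
  (forall i j j', j != j' -> B i j != B i j') ->
  (exists (p : 'rV[R]_3) (q : 'cV[R]_3),
     nash_eq A B p q /\
     (forall p' q', nash_eq A B p' q' -> p' = p /\ q' = q) /\
     (forall j, 0 < p 0 j) /\ (forall i, 0 < q i 0)) ->
  (forall (n : nat) (c : nat -> cell), ~ alternating_cycle A B n c) /\
  (forall c : cell, ~ is_sink A B c) /\
  (forall c : cell, ~ is_source A B c).
Proof.
case=> e [g [f [h [e0 [g0 Hz]]]]] _ _ [p [q [[[SA BRA] [SB BRB]] [Huniq [pp qp]]]]].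
split; [|split].
- move=> n c [n0 [cn [Hx Hor]]].
  pose Phi (a : cell) := e * A a.1 a.2 + f a.2.
  case: Hor => H.
  + have step : forall k, (k < n)%N -> Phi (c k) < Phi (c k.+1).
      move=> k Hk; have [H1 H2] := H k Hk.
      exact: (@step_up R A B e g f h (c k) (c k.+1) e0 g0 Hz (Hx k Hk) H1 H2).
    by have := @chain R Phi n c n0 step; rewrite cn ltxx.
  + have step : forall k, (k < n)%N -> - Phi (c k) < - Phi (c k.+1).
      move=> k Hk; rewrite ltrN2; have [H1 H2] := H k Hk.
      apply: (@step_up R A B e g f h (c k.+1) (c k) e0 g0 Hz).
      * by rewrite (eq_sym (c k.+1).1) (eq_sym (c k.+1).2); exact: Hx.
      * by move=> Hn; apply: H1; rewrite eq_sym.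
      * by move=> Hn; apply: H2; rewrite eq_sym.
    by have := @chain R (fun a => - Phi a) n c n0 step; rewrite cn ltxx.
- case=> i j [Hs1 Hs2] /=.
  have HA : forall k, A k j <= A i j.
    move=> k; have [->|nk] := eqVneq k i; first by [].
    have := Hs1 k nk; rewrite /arrow /= => -[[_ [_ Hl]]|[E _]].
      exact: ltW.
    by move: nk; rewrite E eqxx.
  have HB : forall l, B i l <= B i j.
    move=> l; have [->|nl] := eqVneq l j; first by [].
    have := Hs2 l nl; rewrite /arrow /= => -[[E _]|[_ [_ Hl]]].
      by move: nl; rewrite E eqxx.
    exact: ltW.
  have NE : nash_eq A B (er R i) (ec R j).
    split; split.
    + exact: sigma_er.
    + move=> p' [p'0 p'1]; rewrite payoff_er_ec payoff_ec.
      apply: le_trans (_ : \sum_k p' 0 k * A i j <= _).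
        by apply: ler_sum => k _; exact: ler_wpM2l.
      by rewrite -big_distrl /= p'1 mul1r.
    + exact: sigma_ec.
    + move=> q' [q'0 q'1]; rewrite payoff_er_ec payoff_er.
      apply: le_trans (_ : \sum_l B i j * q' l 0 <= _).
        by apply: ler_sum => l _; exact: ler_wpM2r.
      by rewrite -big_distrr /= q'1 mulr1.
  have [Ep _] := Huniq _ _ NE.
  pose k1 : 'I_3 := if i == ord0 then ord_max else ord0.
  have nk1 : k1 != i.
    rewrite /k1; have [->|ni] := eqVneq i ord0; first by [].
    by rewrite eq_sym.
  by have := pp k1; rewrite -Ep mxE (negbTE nk1) ltxx.
- case=> i j [Hs1 Hs2] /=.
  have HA : forall k, k != i -> A i j < A k j.
    move=> k nk; have := Hs1 k nk; rewrite /arrow /= => -[[_ [_ Hl]]|[E _]].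
      by [].
    by move: nk; rewrite E eqxx.
  have HB : forall l, l != j -> B i j < B i l.
    move=> l nl; have := Hs2 l nl; rewrite /arrow /= => -[[E _]|[_ [_ Hl]]].
      by move: nl; rewrite E eqxx.
    by [].
  have Hx : forall k, \sum_l A k l * q l 0 = payoff p A q.
    apply: (@indiff R (fun k => p 0 k) (fun k => \sum_l A k l * q l 0)) => //.
    + exact: SA.2.
    + by move=> k; rewrite -payoff_er; exact: BRA _ (sigma_er R k).
    + rewrite payoffE; apply: eq_bigr => k _; rewrite big_distrr /=.
      by apply: eq_bigr => l _; rewrite mulrA.
  have Hy : forall l, \sum_k p 0 k * B k l = payoff p B q.
    apply: (@indiff R (fun l => q l 0) (fun l => \sum_k p 0 k * B k l)) => //.
    + exact: SB.2.
    + by move=> l; rewrite -payoff_ec; exact: BRB _ (sigma_ec R l).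
    + rewrite payoffE exchange_big /=; apply: eq_bigr => l _; rewrite big_distrr /=.
      by apply: eq_bigr => k _; rewrite mulrC.
  set vA := payoff p A q. set vB := payoff p B q.
  pose X k l := e * A k l + f l.
  pose F := \sum_l q l 0 * f l. pose H := \sum_k p 0 k * h k.
  have Hrow : forall k, \sum_l q l 0 * X k l = e * vA + F.
    move=> k; rewrite /vA -(Hx k) big_distrr /= /F -big_split /=.
    by apply: eq_bigr => l _; rewrite /X; ring.
  have Hcol : forall l, \sum_k p 0 k * X k l = - (g * vB + H).
    move=> l; rewrite /vB -(Hy l) big_distrr /= /H -big_split /= -sumrN.
    apply: eq_bigr => k _.
    have E : e * A k l + f l = -(g * B k l + h k).
      by apply/eqP; rewrite -addr_eq0; apply/eqP; exact: Hz k l.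
    by rewrite /X E; ring.
  have Hex : \sum_k p 0 k * (\sum_l q l 0 * X k l) =
             \sum_l q l 0 * (\sum_k p 0 k * X k l).
    under eq_bigr do rewrite big_distrr.
    under [RHS]eq_bigr do rewrite big_distrr.
    rewrite exchange_big /=; apply: eq_bigr => l _; apply: eq_bigr => k _.
    by rewrite /X; ring.
  have HV : e * vA + F = - (g * vB + H).
    transitivity (\sum_k p 0 k * (\sum_l q l 0 * X k l)).
      rewrite (eq_bigr (fun k => p 0 k * (e * vA + F))); last by move=> k _; rewrite Hrow.
      by rewrite -big_distrl /= SA.2 mul1r.
    rewrite Hex (eq_bigr (fun l => q l 0 * (- (g * vB + H)))); last by move=> l _; rewrite Hcol.
    by rewrite -big_distrl /= SB.2 mul1r.
  have L1 : \sum_l q l 0 * X i l < X i j.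
    apply: (@strict_avg R (fun l => q l 0) (fun l => X i l) j qp SB.2) => l nl.
    have := HB l nl => Hl.
    have : g * B i j < g * B i l by rewrite ltr_pM2l.
    have := Hz i l; have := Hz i j; rewrite /X; lra.
  have L2 : \sum_k p 0 k * (- X k j) < - X i j.
    apply: (@strict_avg R (fun k => p 0 k) (fun k => - X k j) i pp SA.2) => k nk.
    by rewrite ltrN2 /X ltrD2r ltr_pM2l //; exact: HA.
  rewrite Hrow in L1.
  rewrite (eq_bigr (fun k => - (p 0 k * X k j))) in L2; last by move=> k _; rewrite mulrN.
  rewrite sumrN Hcol in L2.
  lra.
Qed.
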